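(* Let $f_u,f_v,g_u,g_v\in\mathbb{R}$, $D_u,D_v>0$, $\beta>0$ and $\ell_0:=\ell(u_0)\in\mathbb{R}$, and set $$J_0=\begin{pmatrix} f_u & f_v\\ g_u & g_v\end{pmatrix},\qquad L=\begin{pmatrix} D_u & -\beta\ell_0\\ 0 & D_v\end{pmatrix},\qquad J_k=J_0-k^2L\quad (k\ge 0).$$ Assume $J_0$ is stable, i.e. $f_u+g_v<0$ and $f_ug_v-f_vg_u>0$. Define $A=D_ug_v+D_vf_u$, $A_1=\sqrt{D_uD_v}\ge 0$, $A_2=\sqrt{\det(J_0)}>0$ and $A_3=|f_v-g_u|\ge 0$. Then $J_k$ is reactive (for some wavenumber $k\neq 0$) if any one of the following conditions holds: (Case 1) $|\beta\,\ell_0|>2A_1$; (Case 2) $|\beta\,\ell_0|\le 2A_1$ and $J_0$ is reactive (equivalently $A_3>2A_2$); (Case 3) $|\beta\,\ell_0|\le 2A_1$, $J_0$ is not reactive (equivalently $A_3\le 2A_2$), and $$\sqrt{A_1^2-\frac{\beta^2\ell_0^2}{4}}\,\sqrt{4A_2^2-A_3^2}-\frac{(f_v+g_u)\beta\,\ell_0}{2}<A<0.$$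
   Context: This concerns the reaction–diffusion–chemotaxis system $\partial_t u=D_u\Delta u-\beta\nabla\cdot(\ell(u)\nabla v)+f(u,v)$, $\partial_t v=D_v\Delta v+g(u,v)$, linearized at a spatially homogeneous equilibrium $(u_0,v_0)$ (with $f(u_0,v_0)=g(u_0,v_0)=0$); $J_0$ is the Jacobian of $(f,g)$ at $(u_0,v_0)$ with entries $f_u=\partial f/\partial u(u_0,v_0)$ etc., and after Fourier transform in space the linearized dynamics of a mode with wavenumber $k=\|\boldsymbol\omega\|$ is $\widetilde{\mathbf w}_t=J_k\widetilde{\mathbf w}$. A real square matrix $M$ is reactive if $\max\lambda\big((M+M^T)/2\big)>0$, i.e. the largest eigenvalue of its Hermitian part is positive; ''$J_k$ is reactive'' means this holds for $J_k$ for at least one $k\neq0$. *)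

(* Defs.v *)
From mathcomp Require Import all_boot all_order all_algebra.
From mathcomp Require Import reals.
Set Implicit Arguments. Unset Strict Implicit. Unset Printing Implicit Defensive.
Import Order.TTheory GRing.Theory Num.Theory.
Local Open Scope ring_scope.

Definition herm_part (R : realType) (n : nat) (M : 'M[R]_n) : 'M[R]_n :=
  (2%:R)^-1 *: (M + M^T).

(* M is reactive iff the largest eigenvalue of (M + M^T)/2 is positive.
   Since (M+M^T)/2 is real symmetric, its eigenvalues are real and (for n>0)
   exist, so "largest eigenvalue > 0" is literally "some eigenvalue > 0". *)
Definition reactive (R : realType) (n : nat) (M : 'M[R]_n) : Prop :=
  exists lambda : R, 0 < lambda /\ eigenvalue (herm_part M) lambda.

Definition mx2 (R : realType) (a b c d : R) : 'M[R]_2 :=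
  \matrix_(i < 2, j < 2)
    (if i == 0 :> nat then (if j == 0 :> nat then a else b)
     else (if j == 0 :> nat then c else d)).

Definition Jk (R : realType) (fu fv gu gv Du Dv beta l0 k : R) : 'M[R]_2 :=
  mx2 fu fv gu gv - (k ^+ 2) *: mx2 Du (- (beta * l0)) 0 Dv.

(* Main.v *)
Require Import Defs.
From mathcomp Require Import all_boot all_order all_algebra.
From mathcomp Require Import reals.
From mathcomp Require Import ring lra.
Import Order.TTheory GRing.Theory Num.Theory.
Local Open Scope ring_scope.

Lemma det2 (R : comNzRingType) (A : 'M[R]_2) :
  \det A = A 0 0 * A 1 1 - A 0 1 * A 1 0.
Proof.
rewrite (expand_det_row _ ord0) !big_ord_recl big_ord0 /cofactor !det_mx11.
rewrite !mxE /=.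
have -> : lift ord0 0 = 1 :> 'I_2 by apply: val_inj.

have -> : lift 1 0 = 0 :> 'I_2 by apply: val_inj.
rewrite /bump /=.
rewrite !addn0 !add0n expr0 expr1 mul1r mulN1r addr0.
change (ord0 : 'I_2) with (0 : 'I_2); ring.
Qed.

Lemma eig2 (R : fieldType) (H : 'M[R]_2) a :
  eigenvalue H a = ((a - H 0 0) * (a - H 1 1) - H 0 1 * H 1 0 == 0).
Proof.
transitivity (\det (a%:M - H) == 0).
  apply/eigenvalueP/det0P=> [[v Av_av v_nz] | [v v_nz Av_av]]; exists v => //.
    by rewrite mulmxBr Av_av mul_mx_scalar subrr.
  by apply/eqP; rewrite -mul_mx_scalar eq_sym -subr_eq0 -mulmxBr Av_av.
rewrite det2 !mxE /=; congr (_ == 0); ring.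
Qed.

Lemma herm_entries (R : realType) (M : 'M[R]_2) :
  let H := herm_part M in
  [/\ H 0 0 = M 0 0, H 1 1 = M 1 1, H 0 1 = (M 0 1 + M 1 0) / 2
    & H 1 0 = (M 0 1 + M 1 0) / 2].
Proof.
rewrite /herm_part !mxE /=; split; field; rewrite ?pnatr_eq0 //.


Qed.

Lemma produce (R : realType) (M : 'M[R]_2) :
  let p := M 0 0 in let r := M 1 1 in let q := (M 0 1 + M 1 0) / 2 in
  (0 < p \/ 0 < r \/ p * r < q ^+ 2) -> reactive M.
Proof.
move=> p r q hyp.
have [h00 h11 h01 h10] := @herm_entries _ M.
set D := ((p - r) / 2) ^+ 2 + q ^+ 2.
have D0 : 0 <= D by rewrite /D addr_ge0 // sqr_ge0.
set s := Num.sqrt D.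
have s0 : 0 <= s := sqrtr_ge0 D.
have s2 : s ^+ 2 = D := sqr_sqrtr D0.
set m := (p + r) / 2.
exists (m + s); split.
  have [mpos|mneg] := ltP 0 m; first by lra.
  have hq : p * r < q ^+ 2.
    case: hyp => [hp|[hr|//]].
      have : r < 0 by rewrite /m in mneg; lra.
      move=> rn; have : p * r < 0 by rewrite pmulr_rlt0.
      have := sqr_ge0 q; lra.
    have : p < 0 by rewrite /m in mneg; lra.
    move=> pn; have : p * r < 0 by rewrite nmulr_rlt0.
    have := sqr_ge0 q; lra.
  have e : s ^+ 2 - m ^+ 2 = q ^+ 2 - p * r by rewrite s2 /D /m; field.
  rewrite ltNge; apply/negP => hle.
  have h1 : s <= - m by lra.
  have : s ^+ 2 <= m ^+ 2.
    nra.
  lra.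
rewrite eig2 h00 h11 h01 h10 -/p -/r -/q; apply/eqP.
have e : s ^+ 2 = ((p - r) / 2) ^+ 2 + q ^+ 2 by [].
rewrite /m; move: e; set t := s; move=> e.
have -> : (p + r) / 2 + t - p = t - (p - r) / 2 by field.
have -> : (p + r) / 2 + t - r = t + (p - r) / 2 by field.
rewrite -/q; have -> : (t - (p - r) / 2) * (t + (p - r) / 2) = t ^+ 2 - ((p - r) / 2) ^+ 2 by ring.
rewrite e; ring.
Qed.

Lemma extract (R : realType) (M : 'M[R]_2) :
  let p := M 0 0 in let r := M 1 1 in let q := (M 0 1 + M 1 0) / 2 in
  reactive M -> (0 < p \/ 0 < r \/ p * r < q ^+ 2).
Proof.
move=> p r q [l [l0 ev]].
have [h00 h11 h01 h10] := @herm_entries _ M.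
move: ev; rewrite eig2 h00 h11 h01 h10 -/p -/r -/q => /eqP e.
have [hp|hp] := ltP 0 p; first by left.
have [hr|hr] := ltP 0 r; first by right; left.
right; right; rewrite ltNge; apply/negP => hq.
have : 0 <= p * r by rewrite mulr_le0.
nra.
Qed.

Lemma quad (R : realType) (a2 b c0 : R) :
  (a2 < 0 \/ c0 < 0 \/ (0 <= a2 /\ 0 <= c0 /\ 0 < b /\ 4 * a2 * c0 < b ^+ 2)) ->
  exists x, 0 < x /\ a2 * x ^+ 2 - b * x + c0 < 0.
Proof.
case=> [ha|[hc|[ha [hc [hb hd]]]]].
- set N := - a2.
  have hN : 0 < N by rewrite /N; lra.
  set t := (`|b| + `|c0| + 1) / N.
  have ht : N * t = `|b| + `|c0| + 1 by rewrite /t mulrC divfK // gt_eqF.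
  have t0 : 0 <= t by rewrite /t divr_ge0 //; have := normr_ge0 b; have := normr_ge0 c0; lra.
  exists (t + 1); split; first lra.
  have hb1 := ler_norm b; have hb2 := ler_norm (- b); rewrite normrN in hb2.
  have hc1 := ler_norm c0.
  have e : a2 = - N by rewrite /N opprK.
  rewrite e.
  have : N * (t + 1) >= `|b| + `|c0| + 1 by nra.
  move=> h1.
  have : (t + 1) * (N * (t + 1)) >= (t + 1) * (`|b| + `|c0| + 1) by rewrite ler_pM2l //; lra.
  have := normr_ge0 b; have := normr_ge0 c0.
  nra.
- set m := `|a2| + `|b| + 1 - c0.
  have hm : 0 < m by rewrite /m; have := normr_ge0 b; have := normr_ge0 a2; lra.
  set x := - c0 / (2 * m).
  have hx : (2 * m) * x = - c0 by rewrite /x mulrC divfK // gt_eqF //; lra.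
  have x0 : 0 < x by rewrite /x divr_gt0 //; lra.
  have x1 : x <= 1 by rewrite /m in hm hx; have := normr_ge0 b; have := normr_ge0 a2; nra.
  exists x; split => //.
  have ha1 := ler_norm a2; have hb2 := ler_norm (- b); rewrite normrN in hb2.
  have : a2 * x ^+ 2 <= `|a2| * x.
    have : a2 * x ^+ 2 <= `|a2| * x ^+ 2 by rewrite ler_pM2r // exprn_gt0.
    have : `|a2| * x ^+ 2 <= `|a2| * x.
      by rewrite ler_wpM2l // expr2 ger_pMr.
    lra.
  move=> h1.
  have : - b * x <= `|b| * x by rewrite ler_pM2r.
  rewrite /m in hx; nra.
- have [a0|apos] := eqVneq a2 0.
  + exists ((c0 + 1) / b); split; first by rewrite divr_gt0 //; lra.
    rewrite a0 mul0r add0r mulrC divfK ?gt_eqF //; lra.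
  + have ap : 0 < a2 by rewrite lt_neqAle eq_sym apos.
    set x := b / (2 * a2).
    have hx : (2 * a2) * x = b by rewrite /x mulrC divfK // gt_eqF //; lra.
    exists x; split; first by rewrite /x divr_gt0 //; lra.
    have e : (a2 * x ^+ 2 - b * x + c0) * (4 * a2) = 4 * a2 * c0 - b ^+ 2.
      rewrite -hx; ring.
    have : (a2 * x ^+ 2 - b * x + c0) * (4 * a2) < 0 by lra.
    by rewrite pmulr_llt0 //; lra.
Qed.

Lemma Jk_e (R : realType) (fu fv gu gv Du Dv beta l0 k : R) :
  let M := Jk fu fv gu gv Du Dv beta l0 k in
  [/\ M 0 0 = fu - k ^+ 2 * Du, M 1 1 = gv - k ^+ 2 * Dv,
      M 0 1 = fv + k ^+ 2 * (beta * l0) & M 1 0 = gu].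
Proof. rewrite /Jk /mx2 !mxE /=; split; ring. Qed.

Lemma reduction (R : realType) (fu fv gu gv Du Dv beta l0 : R) :
  (exists x, 0 < x /\ (0 < fu - x * Du \/ 0 < gv - x * Dv \/
     (fu - x * Du) * (gv - x * Dv) < ((fv + x * (beta * l0) + gu) / 2) ^+ 2)) ->
  exists k : R, 0 < k /\ reactive (Jk fu fv gu gv Du Dv beta l0 k).
Proof.
move=> [x [x0 h]].
exists (Num.sqrt x); split; first by rewrite sqrtr_gt0.
apply: produce.
have [e1 e2 e3 e4] := @Jk_e _ fu fv gu gv Du Dv beta l0 (Num.sqrt x).
rewrite e1 e2 e3 e4 sqr_sqrtr; last exact: ltW.
exact: h.
Qed.

Theorem proposition2 (R : realType) (fu fv gu gv Du Dv beta l0 : R) :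
  0 < Du -> 0 < Dv -> 0 < beta ->
  fu + gv < 0 -> 0 < fu * gv - fv * gu ->
  let J0 := mx2 fu fv gu gv in
  let A := Du * gv + Dv * fu in
  let A1 := Num.sqrt (Du * Dv) in
  let A2 := Num.sqrt (fu * gv - fv * gu) in
  let A3 := `|fv - gu| in
  (  2 * A1 < `|beta * l0|
  \/ (`|beta * l0| <= 2 * A1 /\ reactive J0)
  \/ (`|beta * l0| <= 2 * A1 /\ ~ reactive J0 /\
      Num.sqrt (A1 ^+ 2 - (beta ^+ 2 * l0 ^+ 2) / 4) * Num.sqrt (4 * A2 ^+ 2 - A3 ^+ 2)
        - (fv + gu) * beta * l0 / 2 < A /\ A < 0)) ->
  exists k : R, 0 < k /\ reactive (Jk fu fv gu gv Du Dv beta l0 k).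
Proof.
move=> hDu hDv hb hs hd J0 A A1 A2 A3 H.
apply: reduction.
set a2 := Du * Dv - beta ^+ 2 * l0 ^+ 2 / 4.
set b' := A + (fv + gu) * beta * l0 / 2.
set c0 := fu * gv - (fv + gu) ^+ 2 / 4.
have key : forall x, (fu - x * Du) * (gv - x * Dv) - ((fv + x * (beta * l0) + gu) / 2) ^+ 2
    = a2 * x ^+ 2 - b' * x + c0.
  by move=> x; rewrite /a2 /b' /c0 /A; field.
have fromquad : (exists x, 0 < x /\ a2 * x ^+ 2 - b' * x + c0 < 0) ->
  exists x, 0 < x /\ (0 < fu - x * Du \/ 0 < gv - x * Dv \/
     (fu - x * Du) * (gv - x * Dv) < ((fv + x * (beta * l0) + gu) / 2) ^+ 2).
  move=> [x [x0 hx]]; exists x; split => //; right; right.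
  have := key x; lra.
have hA1 : A1 ^+ 2 = Du * Dv by rewrite sqr_sqrtr // mulr_ge0 // ltW.
have A10 : 0 <= A1 by apply: sqrtr_ge0.
have ny : `|beta * l0| ^+ 2 = beta ^+ 2 * l0 ^+ 2 by rewrite real_normK ?num_real // exprMn.
have ny0 := normr_ge0 (beta * l0).
case: H => [h1|[[h1 h2]|[h1 [_ [h3 h4]]]]].
- apply: fromquad; apply: quad; left.
  have : (2 * A1) ^+ 2 < `|beta * l0| ^+ 2 by rewrite ltr_pXn2r // nnegrE; lra.
  rewrite ny exprMn hA1 /a2; lra.
- have := @extract _ _ h2; rewrite /J0 /mx2 !mxE /=.
  case=> [hf|[hg|hc]].
  + exists (fu / (2 * Du)); split; first by rewrite divr_gt0 //; lra.
    left; have -> : fu / (2 * Du) * Du = fu / 2 by field; rewrite gt_eqF.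
    lra.
  + exists (gv / (2 * Dv)); split; first by rewrite divr_gt0 //; lra.
    right; left; have -> : gv / (2 * Dv) * Dv = gv / 2 by field; rewrite gt_eqF.
    lra.
  + apply: fromquad; apply: quad; right; left.
    rewrite /c0; move: hc; have -> : ((fv + gu) / 2) ^+ 2 = (fv + gu) ^+ 2 / 4 by field.
    lra.
- have [hc|hc] := ltP c0 0.
    by apply: fromquad; apply: quad; right; left.
  apply: fromquad; apply: quad; right; right.
  have ha : 0 <= a2.
    have : `|beta * l0| ^+ 2 <= (2 * A1) ^+ 2 by rewrite ler_pXn2r // nnegrE; lra.
    rewrite ny exprMn hA1 /a2; lra.
  have e1 : A1 ^+ 2 - beta ^+ 2 * l0 ^+ 2 / 4 = a2 by rewrite hA1.
  have hA2 : A2 ^+ 2 = fu * gv - fv * gu by rewrite sqr_sqrtr // ltW.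
  have hA3 : A3 ^+ 2 = (fv - gu) ^+ 2 by rewrite real_normK ?num_real.
  have e2 : 4 * A2 ^+ 2 - A3 ^+ 2 = 4 * c0 by rewrite hA2 hA3 /c0; field.
  rewrite e1 e2 in h3.
  have c4 : 0 <= 4 * c0 by lra.
  have S1 := sqr_sqrtr ha; have S2 := sqr_sqrtr c4.
  have S10 := sqrtr_ge0 a2; have S20 := sqrtr_ge0 (4 * c0).
  move: h3 S1 S2 S10 S20; set s1 := Num.sqrt a2; set s2 := Num.sqrt (4 * c0).
  move=> h3 S1 S2 S10 S20.
  have hb' : s1 * s2 < b' by rewrite /b'; lra.
  have p0 : 0 <= s1 * s2 by apply: mulr_ge0.
  split => //; split => //; split; first by lra.
  have : (s1 * s2) ^+ 2 < b' ^+ 2 by rewrite ltr_pXn2r // nnegrE; lra.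
  by rewrite exprMn S1 S2; lra.
Qed.
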